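(* The axiom system $\mathbf{AX}^{prob}=\{\mathrm{Taut},\mathrm{MP},\mathrm{Ineq},E1,E2,E3,E4,E5\}$ is sound and complete for $\mathcal{L}^E$ with respect to $\mathcal{M}^{prob}$: a formula of $\mathcal{L}^E$ is provable in $\mathbf{AX}^{prob}$ iff it is true in every probability structure.
   Context: Language $\mathcal L^E$: fix primitive propositions $\Phi_0$; propositional formulas built with $\neg,\wedge$; $\mathit{true}$ a tautology, $\mathit{false}=\neg\mathit{true}$. A propositional gamble is $b_1\phi_1+\cdots+b_n\phi_n$ (integers $b_i$); sums and integer multiples are formed termwise, $\phi$ identified with $1\phi$. Formulas are Boolean combinations of expectation inequalities $a_1e(\gamma_1)+\cdots+a_ke(\gamma_k)\ge b$ (integers $a_i,b$); $t\le b$ abbreviates $-t\ge-b$, $t>b$ abbreviates $\neg(t\le b)$, $t=b$ abbreviates $t\ge b\wedge t\le b$, $t_1\ge t_2$ abbreviates $t_1-t_2\ge0$. A probability structure is $M=(W,\mathcal F,\mu,\pi)$: $W$ a nonempty set, $\mathcal F$ an algebra on $W$, $\mu$ a probability measure on $\mathcal F$, $\pi$ a truth assignment to $\Phi_0$ at each world with every $\{w:\pi(w)(p)=\text{true}\}\in\mathcal F$; $[\![\phi]\!]_M$ is the set of worlds satisfying $\phi$, $[\![\sum b_i\phi_i]\!]_M=\sum b_iX_{[\![\phi_i]\!]_M}$, and $M\models\sum a_ie(\gamma_i)\ge b$ iff $\sum a_iE_\mu([\![\gamma_i]\!]_M)\ge b$ ($E_\mu$ ordinary expectation); Boolean connectives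 classical. $\mathcal M^{prob}$ is the class of probability structures. Axioms: Taut: all instances in $\mathcal L^E$ of propositional tautologies. MP: from $f$ and $f\Rightarrow g$ infer $g$. Ineq: all instances of valid formulas about linear inequalities, i.e. Boolean combinations of inequalities $c_1x_1+\cdots+c_nx_n\ge c$ true under every assignment of reals to the variables, with each variable $x_i$ uniformly replaced by a term $e(\gamma_i)$. E1: $e(\gamma_1+\gamma_2)=e(\gamma_1)+e(\gamma_2)$. E2: $e(a\phi)=ae(\phi)$ for integers $a$. E3: $e(\mathit{false})=0$. E4: $e(\mathit{true})=1$. E5: $e(\gamma_1)\le e(\gamma_2)$ whenever $\gamma_1\le\gamma_2$ is a valid gamble inequality, i.e. $[\![\gamma_1]\!]_M(w)\le[\![\gamma_2]\!]_M(w)$ for every nonempty set of worlds with truth assignment and every world $w$. *)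

(* Defs.v *)
From Stdlib Require Import Reals ZArith List.
Import ListNotations.
Open Scope R_scope.
Set Implicit Arguments.

Section Logic.
Variable P : Type.
Variable p0 : P.     (* a fixed primitive proposition, used to build the tautology `true` *)

Inductive pform : Type :=
| PVar : P -> pform
| PNot : pform -> pform
| PAnd : pform -> pform -> pform.

Definition ptrue : pform := PNot (PAnd (PVar p0) (PNot (PVar p0))).
Definition pfalse : pform := PNot ptrue.

Fixpoint psat (v : P -> bool) (phi : pform) : bool :=
  match phi with
  | PVar p => v p
  | PNot a => negb (psat v a)
  | PAnd a b => andb (psat v a) (psat v b)
  end.

Definition gamble := list (Z * pform).
Definition gplus (g1 g2 : gamble) : gamble := g1 ++ g2.
Definition gscale (a : Z) (g : gamble) : gamble :=
  map (fun bp => ((a * fst bp)%Z, snd bp)) g.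
Definition gof (phi : pform) : gamble := [(1%Z, phi)].

Definition gval (v : P -> bool) (g : gamble) : Z :=
  fold_right (fun bp acc => ((if psat v (snd bp) then fst bp else 0) + acc)%Z) 0%Z g.

(* a term a1 e(g1) + ... + ak e(gk) *)
Definition term := list (Z * gamble).

Inductive formula : Type :=
| FGe  : term -> Z -> formula
| FNot : formula -> formula
| FAnd : formula -> formula -> formula.

Definition FImp (f g : formula) : formula := FNot (FAnd f (FNot g)).

Definition tneg (t : term) : term := map (fun ag => ((- fst ag)%Z, snd ag)) t.
Definition tminus (t1 t2 : term) : term := t1 ++ tneg t2.
Definition FLe (t : term) (b : Z) : formula := FGe (tneg t) (- b)%Z.
Definition FEq (t : term) (b : Z) : formula := FAnd (FGe t b) (FLe t b).
Definition FGeT (t1 t2 : term) : formula := FGe (tminus t1 t2) 0%Z.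
Definition FEqT (t1 t2 : term) : formula := FEq (tminus t1 t2) 0%Z.
Definition FLeT (t1 t2 : term) : formula := FGeT t2 t1.
Definition e (g : gamble) : term := [(1%Z, g)].

Record prob_structure : Type := {
  W : Type;
  Fm : (W -> Prop) -> Prop;
  mu : (W -> Prop) -> R;             (* the probability measure, meaningful on F *)
  pi : W -> P -> bool;
  W_nonempty : inhabited W;
  Fm_full : Fm (fun _ => True);
  Fm_compl : forall A, Fm A -> Fm (fun w => ~ A w);
  Fm_union : forall A B, Fm A -> Fm B -> Fm (fun w => A w \/ B w);
  mu_nonneg : forall A, Fm A -> 0 <= mu A;
  mu_full : mu (fun _ => True) = 1;
  mu_add : forall A B, Fm A -> Fm B -> (forall w, A w -> B w -> False) ->
             mu (fun w => A w \/ B w) = mu A + mu B;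
  pi_meas : forall p, Fm (fun w => pi w p = true)
}.

(* all subset sums of a list of integers: the possible values of a gamble *)
Fixpoint subsums (l : list Z) : list Z :=
  match l with
  | [] => [0%Z]
  | b :: l' => subsums l' ++ map (fun s => (b + s)%Z) (subsums l')
  end.

(* ordinary expectation of the simple random variable [[g]]_M:
   sum over its (finitely many) possible values x of x * mu([[g]] = x) *)
Definition expect (M : prob_structure) (g : gamble) : R :=
  fold_right Rplus 0
    (map (fun x => IZR x * mu M (fun w => gval (pi M w) g = x))
         (nodup Z.eq_dec (subsums (map fst g)))).

Definition term_val (M : prob_structure) (t : term) : R :=
  fold_right Rplus 0 (map (fun ag => IZR (fst ag) * expect M (snd ag)) t).

Fixpoint holds (M : prob_structure) (f : formula) : Prop :=
  match f with
  | FGe t b => term_val M t >= IZR b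
  | FNot g => ~ holds M g
  | FAnd g h => holds M g /\ holds M h
  end.

Definition valid_prob (f : formula) : Prop := forall M : prob_structure, holds M f.

Inductive tform : Type :=
| TVar : nat -> tform
| TNot : tform -> tform
| TAnd : tform -> tform -> tform.

Fixpoint teval (v : nat -> bool) (t : tform) : bool :=
  match t with
  | TVar n => v n
  | TNot a => negb (teval v a)
  | TAnd a b => andb (teval v a) (teval v b)
  end.

Definition tautology (t : tform) : Prop := forall v, teval v t = true.

Fixpoint tsubst (s : nat -> formula) (t : tform) : formula :=
  match t with
  | TVar n => s n
  | TNot a => FNot (tsubst s a)
  | TAnd a b => FAnd (tsubst s a) (tsubst s b)
  end.

Inductive lform : Type :=
| LGe  : list (Z * nat) -> Z -> lform
| LNot : lform -> lform
| LAnd : lform -> lform -> lform.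

Fixpoint leval (x : nat -> R) (l : lform) : Prop :=
  match l with
  | LGe cs c => fold_right Rplus 0 (map (fun cn => IZR (fst cn) * x (snd cn)) cs) >= IZR c
  | LNot a => ~ leval x a
  | LAnd a b => leval x a /\ leval x b
  end.

Definition lvalid (l : lform) : Prop := forall x : nat -> R, leval x l.

Fixpoint lsubst (s : nat -> gamble) (l : lform) : formula :=
  match l with
  | LGe cs c => FGe (map (fun cn => (fst cn, s (snd cn))) cs) c
  | LNot a => FNot (lsubst s a)
  | LAnd a b => FAnd (lsubst s a) (lsubst s b)
  end.

Definition valid_gamble_le (g1 g2 : gamble) : Prop :=
  forall (Wr : Type) (pr : Wr -> P -> bool) (w : Wr),
    (gval (pr w) g1 <= gval (pr w) g2)%Z.

Inductive provable : formula -> Prop :=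
| ax_taut : forall t s, tautology t -> provable (tsubst s t)
| ax_ineq : forall l s, lvalid l -> provable (lsubst s l)
| ax_E1 : forall g1 g2, provable (FEqT (e (gplus g1 g2)) (e g1 ++ e g2))
| ax_E2 : forall (a : Z) phi, provable (FEqT (e [(a, phi)]) [(a, gof phi)])
| ax_E3 : provable (FEq (e (gof pfalse)) 0%Z)
| ax_E4 : provable (FEq (e (gof ptrue)) 1%Z)
| ax_E5 : forall g1 g2, valid_gamble_le g1 g2 -> provable (FLeT (e g1) (e g2))
| rule_MP : forall f g, provable f -> provable (FImp f g) -> provable g.

End Logic.

(* Main.v *)
Require Import Defs.
From Stdlib Require Import Reals ZArith List Lia Lra Bool.
From Stdlib Require Import Classical ClassicalEpsilon FunctionalExtensionality PropExtensionality.
Import ListNotations.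
Open Scope R_scope.

Definition RS {A} (f : A -> R) (l : list A) : R := fold_right Rplus 0 (map f l).

Lemma RS_cons {A} (f : A -> R) a l : RS f (a :: l) = f a + RS f l.
Proof. reflexivity. Qed.
Lemma RS_nil {A} (f : A -> R) : RS f [] = 0.
Proof. reflexivity. Qed.
Lemma RS_app {A} (f : A -> R) l1 l2 : RS f (l1 ++ l2) = RS f l1 + RS f l2.
Proof. induction l1; simpl app; rewrite ?RS_cons, ?RS_nil; [lra|rewrite IHl1; lra]. Qed.
Lemma RS_ext_in {A} (f g : A -> R) l : (forall x, In x l -> f x = g x) -> RS f l = RS g l.
Proof. intro H; induction l; [reflexivity|rewrite !RS_cons, H, IHl; auto; [intros; apply H; simpl; auto|simpl; auto]]. Qed.
Lemma RS_plus {A} (f g : A -> R) l : RS (fun x => f x + g x) l = RS f l + RS g l.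
Proof. induction l; rewrite ?RS_cons, ?RS_nil; [lra|rewrite IHl; lra]. Qed.
Lemma RS_scal {A} c (f : A -> R) l : RS (fun x => c * f x) l = c * RS f l.
Proof. induction l; rewrite ?RS_cons, ?RS_nil; [lra|rewrite IHl; lra]. Qed.
Lemma RS_zero {A} (l : list A) : RS (fun _ => 0) l = 0.
Proof. induction l; rewrite ?RS_cons, ?RS_nil; [lra|rewrite IHl; lra]. Qed.
Lemma RS_le {A} (f g : A -> R) l : (forall x, In x l -> f x <= g x) -> RS f l <= RS g l.
Proof. intro H; induction l; rewrite ?RS_cons, ?RS_nil; [lra|].
  assert (f a <= g a) by (apply H; simpl; auto).
  assert (RS f l <= RS g l) by (apply IHl; intros; apply H; simpl; auto). lra. Qed.
Lemma RS_map {A B} (f : B -> R) (h : A -> B) l : RS f (map h l) = RS (fun x => f (h x)) l.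
Proof. unfold RS; rewrite map_map; reflexivity. Qed.

Lemma RS_notin (X : list Z) y m : ~ In y X ->
  RS (fun x => IZR x * (if Z.eq_dec y x then m else 0)) X = 0.
Proof. induction X; intro H; rewrite ?RS_cons, ?RS_nil; [lra|].
  destruct (Z.eq_dec y a). { exfalso; apply H; left; auto. }
  rewrite IHX; [lra|]. intro; apply H; right; auto. Qed.

Lemma RS_single (X : list Z) y m : NoDup X -> In y X ->
  RS (fun x => IZR x * (if Z.eq_dec y x then m else 0)) X = IZR y * m.
Proof. induction X; intros Hn Hi; [destruct Hi|]. inversion Hn; subst.
  rewrite RS_cons. destruct (Z.eq_dec y a).
  - subst. rewrite RS_notin; auto. lra.
  - destruct Hi as [->|Hi]; [congruence|]. rewrite IHX; auto. lra. Qed.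

Lemma RS_swap {A} (X : list Z) (L : list A) (f : A -> Z) (m : A -> R) :
  NoDup X -> (forall a, In a L -> In (f a) X) ->
  RS (fun x => IZR x * RS (fun a => if Z.eq_dec (f a) x then m a else 0) L) X
  = RS (fun a => IZR (f a) * m a) L.
Proof. intros Hn; induction L as [|a L IH]; intros Hi.
  - rewrite RS_nil. rewrite (RS_ext_in _ (fun _ => 0)); [apply RS_zero|].
    intros; rewrite RS_nil; lra.
  - rewrite RS_cons.
    rewrite (RS_ext_in _ (fun x => IZR x * (if Z.eq_dec (f a) x then m a else 0) +
       IZR x * RS (fun a0 => if Z.eq_dec (f a0) x then m a0 else 0) L)).
    2:{ intros; rewrite RS_cons; lra. }
    rewrite RS_plus, RS_single, IH; auto.
    + intros; apply Hi; right; auto.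
    + apply Hi; left; auto. Qed.

Lemma mu_ext {P} (M : prob_structure P) (A B : W M -> Prop) :
  (forall w, A w <-> B w) -> mu M A = mu M B.
Proof. intro H. f_equal. apply functional_extensionality; intro w;
  apply propositional_extensionality; auto. Qed.
Lemma Fm_ext {P} (M : prob_structure P) (A B : W M -> Prop) :
  Fm M A -> (forall w, A w <-> B w) -> Fm M B.
Proof. intros HA H. replace B with A; auto. apply functional_extensionality; intro w;
  apply propositional_extensionality; auto. Qed.
Lemma Fm_empty {P} (M : prob_structure P) : Fm M (fun _ => False).
Proof. eapply Fm_ext. apply Fm_compl, Fm_full. intros w; cbv beta; split; [intro H; apply H; exact I|intros []]. Qed.
Lemma mu_empty {P} (M : prob_structure P) : mu M (fun _ => False) = 0.
Proof. pose proof (mu_add M _ _ (Fm_full M) (Fm_empty M) (fun w _ h => h)).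
  rewrite (mu_ext M _ (fun _ => True)) in H; [|intros; tauto]. lra. Qed.
Lemma Fm_inter {P} (M : prob_structure P) A B : Fm M A -> Fm M B -> Fm M (fun w => A w /\ B w).
Proof. intros HA HB. eapply Fm_ext. apply (Fm_compl M _ (Fm_union M _ _ (Fm_compl M _ HA) (Fm_compl M _ HB))).
  intro w; cbv beta; destruct (classic (A w)), (classic (B w)); tauto. Qed.
Lemma Fm_psat {P} (M : prob_structure P) d : Fm M (fun w => psat (pi M w) d = true).
Proof. induction d.
  - apply pi_meas.
  - eapply Fm_ext. apply Fm_compl, IHd. intro w; simpl; destruct (psat (pi M w) d); simpl; intuition congruence.
  - eapply Fm_ext. apply Fm_inter; [apply IHd1|apply IHd2]. intro w; simpl; rewrite andb_true_iff; tauto.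
Qed.

Fixpoint cnt {P} (v : P -> bool) (L : list (pform P)) : nat :=
  match L with [] => 0%nat | d :: L' => ((if psat v d then 1 else 0) + cnt v L')%nat end.

Lemma cnt0 {P} (v : P -> bool) L d : cnt v L = 0%nat -> In d L -> psat v d = false.
Proof. induction L as [|a L IHL]; simpl; intros H Hi; [destruct Hi|].
  destruct (psat v a) eqn:E; simpl in H; [lia|]. destruct Hi as [<-|Hi]; auto. Qed.

Lemma cnt_exists {P} (v : P -> bool) L : cnt v L = 1%nat -> exists d, In d L /\ psat v d = true.
Proof. induction L; simpl; intro H; [lia|]. destruct (psat v a) eqn:E.
  - exists a; auto.
  - destruct IHL as [d [? ?]]; [lia|]. exists d; auto. Qed.

Lemma mu_union {P} (M : prob_structure P) (q : pform P -> bool) (L : list (pform P)) :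
  (forall w, (cnt (pi M w) L <= 1)%nat) ->
  Fm M (fun w => exists d, In d L /\ q d = true /\ psat (pi M w) d = true) /\
  mu M (fun w => exists d, In d L /\ q d = true /\ psat (pi M w) d = true) =
  RS (fun d => if q d then mu M (fun w => psat (pi M w) d = true) else 0) L.
Proof.
  induction L as [|d L IH]; intros Hc.
  - split.
    + eapply Fm_ext. apply Fm_empty. intro w; split; [tauto|intros [? [[] _]]].
    + rewrite RS_nil, <- (mu_empty M). apply mu_ext. intro w; split; [intros [? [[] _]]|tauto].
  - assert (Hc' : forall w, (cnt (pi M w) L <= 1)%nat).
    { intro w; specialize (Hc w); simpl in Hc; lia. }
    destruct (IH Hc') as [HF Hm]. rewrite RS_cons.
    destruct (q d) eqn:Hq.
    + assert (Hiff : forall w, (exists d0, In d0 (d :: L) /\ q d0 = true /\ psat (pi M w) d0 = true) <->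
        (psat (pi M w) d = true \/ exists d0, In d0 L /\ q d0 = true /\ psat (pi M w) d0 = true)).
      { intro w; split.
        - intros [d0 [[<-|Hi] [H1 H2]]]; [left; auto|right; eauto].
        - intros [H|[d0 [Hi [H1 H2]]]]; [exists d; simpl; auto|exists d0; simpl; auto]. }
      split.
      * eapply Fm_ext; [apply (Fm_union M _ _ (Fm_psat M d) HF)|]. intro w; cbv beta; rewrite Hiff; tauto.
      * rewrite (mu_ext M _ _ Hiff), mu_add; [rewrite Hm; reflexivity|apply Fm_psat|apply HF|].
        intros w Hd [d0 [Hi [_ Hs]]]. specialize (Hc w); simpl in Hc; rewrite Hd in Hc.
        rewrite (cnt0 (pi M w) L d0) in Hs; [discriminate|lia|auto].
    + assert (Hiff : forall w, (exists d0, In d0 (d :: L) /\ q d0 = true /\ psat (pi M w) d0 = true) <->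
        (exists d0, In d0 L /\ q d0 = true /\ psat (pi M w) d0 = true)).
      { intro w; split.
        - intros [d0 [[<-|Hi] [H1 H2]]]; [congruence|eauto].
        - intros [d0 [Hi [H1 H2]]]; exists d0; simpl; auto. }
      split.
      * eapply Fm_ext; [apply HF|]. intro w; cbv beta; rewrite Hiff; tauto.
      * rewrite (mu_ext M _ _ Hiff), Hm; lra.
Qed.

Fixpoint atoms {P} (p0 : P) (S : list (pform P)) : list (pform P) :=
  match S with
  | [] => [ptrue p0]
  | phi :: S' => map (PAnd phi) (atoms p0 S') ++ map (PAnd (PNot phi)) (atoms p0 S')
  end.

Lemma psat_ptrue {P} (v : P -> bool) p0 : psat v (ptrue p0) = true.
Proof. simpl; destruct (v p0); reflexivity. Qed.

Lemma cnt_app {P} (v : P -> bool) l1 l2 : cnt v (l1 ++ l2) = (cnt v l1 + cnt v l2)%nat.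
Proof. induction l1; simpl; lia. Qed.
Lemma cnt_map_and {P} (v : P -> bool) phi L :
  cnt v (map (PAnd phi) L) = if psat v phi then cnt v L else 0%nat.
Proof. induction L; simpl; destruct (psat v phi); simpl; auto; rewrite IHL; auto. Qed.

Lemma cnt_atoms {P} (v : P -> bool) p0 S : cnt v (atoms p0 S) = 1%nat.
Proof. induction S; simpl.
  - destruct (v p0); reflexivity.
  - rewrite cnt_app, !cnt_map_and, IHS. simpl. destruct (psat v a); reflexivity. Qed.

Lemma atoms_agree {P} p0 (S : list (pform P)) d v v' :
  In d (atoms p0 S) -> psat v d = true -> psat v' d = true ->
  forall phi, In phi S -> psat v phi = psat v' phi.
Proof.
  revert d; induction S as [|a S IH]; intros d Hd H1 H2 phi Hphi; [destruct Hphi|].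
  simpl in Hd. apply in_app_or in Hd. destruct Hd as [Hd|Hd]; apply in_map_iff in Hd;
    destruct Hd as [d' [<- Hd']]; simpl in H1, H2; apply andb_true_iff in H1, H2;
    destruct H1 as [H1 H1'], H2 as [H2 H2'];
    (destruct Hphi as [<-|Hphi]; [|eapply IH; eauto]).
  - congruence.
  - apply negb_true_iff in H1, H2. congruence.
Qed.

Lemma gval_app {P} (v : P -> bool) g1 g2 : gval v (g1 ++ g2) = (gval v g1 + gval v g2)%Z.
Proof. induction g1; simpl; [reflexivity|rewrite IHg1; lia]. Qed.

Lemma gval_agree {P} (v v' : P -> bool) g :
  (forall phi, In phi (map snd g) -> psat v phi = psat v' phi) -> gval v g = gval v' g.
Proof. induction g as [|[b phi] g IH]; simpl; intro H; [reflexivity|].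
  rewrite H by auto. rewrite IH; auto. Qed.

Lemma gval_in_subsums {P} (v : P -> bool) g : In (gval v g) (subsums (map fst g)).
Proof. induction g as [|[b phi] g IH]; simpl; [auto|]. apply in_or_app.
  destruct (psat v phi); [right; apply (in_map (fun s => (b + s)%Z)); auto|left; auto]. Qed.

Definition choose_val {P} (d : pform P) : P -> bool :=
  match excluded_middle_informative (exists v, psat v d = true) with
  | left H => proj1_sig (constructive_indefinite_description _ H)
  | right _ => fun _ => true
  end.

Lemma choose_val_spec {P} (d : pform P) v : psat v d = true -> psat (choose_val d) d = true.
Proof. intro H. unfold choose_val. destruct excluded_middle_informative as [H'|H'].
  - apply (proj2_sig (constructive_indefinite_description _ H')).
  - exfalso; eauto. Qed.

Definition cc {P} (g : gamble P) (d : pform P) : Z := gval (choose_val d) g.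

Lemma cc_spec {P} p0 (S : list (pform P)) g d v : incl (map snd g) S -> In d (atoms p0 S) ->
  psat v d = true -> gval v g = cc g d.
Proof. intros Hi Hd Hv. unfold cc. apply gval_agree. intros phi Hphi.
  eapply atoms_agree; eauto. eapply choose_val_spec; eauto. Qed.

Lemma expect_atoms {P} (p0 : P) (M : prob_structure P) S g : incl (map snd g) S ->
  expect M g = RS (fun d => IZR (cc g d) * mu M (fun w => psat (pi M w) d = true)) (atoms p0 S).
Proof.
  intros Hi.
  change (expect M g) with (RS (fun x => IZR x * mu M (fun w => gval (pi M w) g = x))
     (nodup Z.eq_dec (subsums (map fst g)))).
  rewrite <- (RS_swap (nodup Z.eq_dec (subsums (map fst g))) (atoms p0 S) (cc g)
     (fun d => mu M (fun w => psat (pi M w) d = true))).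
  - apply RS_ext_in; intros x _. f_equal.
    destruct (mu_union M (fun d => if Z.eq_dec (cc g d) x then true else false) (atoms p0 S)) as [_ Hm].
    { intro w; rewrite cnt_atoms; auto. }
    transitivity (mu M (fun w => exists d, In d (atoms p0 S) /\
        (if Z.eq_dec (cc g d) x then true else false) = true /\ psat (pi M w) d = true)).
    + apply mu_ext. intro w. split.
      * intro Hx. destruct (cnt_exists (pi M w) (atoms p0 S) (cnt_atoms _ _ _)) as [d [Hin Hs]].
        exists d; repeat split; auto. rewrite <- (cc_spec p0 S g d (pi M w)), Hx; auto.
        destruct Z.eq_dec; congruence.
      * intros [d [Hin [Hq Hs]]]. rewrite (cc_spec p0 S g d (pi M w)); auto.
        destruct Z.eq_dec; congruence.
    + rewrite Hm. apply RS_ext_in; intros d _. destruct Z.eq_dec; reflexivity.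
  - apply NoDup_nodup.
  - intros d _. apply nodup_In. apply gval_in_subsums.
Qed.

Definition tv {P} (I : gamble P -> R) (t : term P) : R := RS (fun ag => IZR (fst ag) * I (snd ag)) t.

Fixpoint hw {P} (I : gamble P -> R) (f : formula P) : Prop :=
  match f with
  | FGe t b => tv I t >= IZR b
  | FNot g => ~ hw I g
  | FAnd g h => hw I g /\ hw I h
  end.

Lemma holds_hw {P} (M : prob_structure P) f : holds M f <-> hw (expect M) f.
Proof. induction f; simpl; [tauto|rewrite IHf; tauto|rewrite IHf1, IHf2; tauto]. Qed.

Lemma tv_app {P} (I : gamble P -> R) t1 t2 : tv I (t1 ++ t2) = tv I t1 + tv I t2.
Proof. apply RS_app. Qed.
Lemma tv_neg {P} (I : gamble P -> R) t : tv I (tneg t) = - tv I t.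
Proof. unfold tv, tneg. rewrite RS_map. simpl.
  rewrite (RS_ext_in _ (fun x => -1 * (IZR (fst x) * I (snd x)))); [rewrite RS_scal; lra|].
  intros; rewrite opp_IZR; lra. Qed.
Lemma tv_single {P} (I : gamble P -> R) a g : tv I [(a, g)] = IZR a * I g.
Proof. unfold tv; rewrite RS_cons, RS_nil; simpl; lra. Qed.
Lemma tv_e {P} (I : gamble P -> R) g : tv I (e g) = I g.
Proof. unfold e; rewrite tv_single; simpl; lra. Qed.

Lemma hw_FEqT {P} (I : gamble P -> R) t1 t2 : hw I (FEqT t1 t2) <-> tv I t1 = tv I t2.
Proof. unfold FEqT, FEq, FLe, tminus; simpl. rewrite !tv_neg, !tv_app, !tv_neg.
  simpl. split; [intros [? ?]; lra|intro; lra]. Qed.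
Lemma hw_FLeT {P} (I : gamble P -> R) t1 t2 : hw I (FLeT t1 t2) <-> tv I t1 <= tv I t2.
Proof. unfold FLeT, FGeT, tminus; simpl. rewrite tv_app, tv_neg. simpl. split; intro; lra. Qed.
Lemma hw_FEq {P} (I : gamble P -> R) t b : hw I (FEq t b) <-> tv I t = IZR b.
Proof. unfold FEq, FLe; simpl. rewrite tv_neg, opp_IZR. split; [intros [? ?]; lra|intro; lra]. Qed.

Lemma tsubst_hw {P} (I : gamble P -> R) s t :
  hw I (tsubst s t) <-> teval (fun n => if excluded_middle_informative (hw I (s n)) then true else false) t = true.
Proof. induction t; simpl.
  - destruct excluded_middle_informative; split; intros; auto; try congruence; contradiction.
  - rewrite negb_true_iff, IHt. destruct teval; intuition congruence.
  - rewrite andb_true_iff, IHt1, IHt2; tauto. Qed.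

Lemma lsubst_hw {P} (I : gamble P -> R) s l : hw I (lsubst s l) <-> leval (fun n => I (s n)) l.
Proof. induction l; simpl.
  - unfold tv, RS. rewrite map_map. simpl. tauto.
  - rewrite IHl; tauto.
  - rewrite IHl1, IHl2; tauto. Qed.

Lemma incl_l {A} (l1 l2 : list A) : incl l1 (l1 ++ l2).
Proof. intros x H; apply in_or_app; auto. Qed.
Lemma incl_r {A} (l1 l2 : list A) : incl l2 (l1 ++ l2).
Proof. intros x H; apply in_or_app; auto. Qed.

Theorem soundness {P} (p0 : P) f : provable p0 f -> valid_prob f.
Proof.
  intros H; induction H; intro M; apply holds_hw.
  - apply tsubst_hw. apply H.
  - apply lsubst_hw. apply H.
  - apply hw_FEqT. rewrite tv_app, !tv_e. unfold gplus.
    set (S := map snd (g1 ++ g2)).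
    rewrite (expect_atoms p0 M S (g1 ++ g2)), (expect_atoms p0 M S g1), (expect_atoms p0 M S g2);
      try (unfold S; rewrite ?map_app; auto using incl_l, incl_r, incl_refl).
    rewrite <- RS_plus. apply RS_ext_in. intros d _. unfold cc. rewrite gval_app, plus_IZR. lra.
  - apply hw_FEqT. rewrite tv_e, tv_single. unfold gof.
    rewrite (expect_atoms p0 M [phi] [(a, phi)]), (expect_atoms p0 M [phi] [(1%Z, phi)]);
      try (intros x Hx; exact Hx).
    rewrite <- RS_scal. apply RS_ext_in. intros d _. unfold cc. simpl.
    destruct (psat (choose_val d) phi); simpl; rewrite ?Z.add_0_r; lra.
  - apply hw_FEq. rewrite tv_e. unfold gof.
    rewrite (expect_atoms p0 M [pfalse p0] [(1%Z, pfalse p0)]); [|intros x Hx; exact Hx].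
    rewrite <- (RS_zero (atoms p0 [pfalse p0])). apply RS_ext_in. intros d _. unfold cc. simpl.
    destruct (choose_val d p0); simpl; lra.
  - apply hw_FEq. rewrite tv_e. unfold gof.
    rewrite (expect_atoms p0 M [ptrue p0] [(1%Z, ptrue p0)]); [|intros x Hx; exact Hx].
    destruct (mu_union M (fun _ => true) (atoms p0 [ptrue p0])) as [_ Hm].
    { intro w; rewrite cnt_atoms; auto. }
    rewrite (RS_ext_in _ (fun d => if true then mu M (fun w => psat (pi M w) d = true) else 0)).
    2:{ intros d _. unfold cc. simpl. destruct (choose_val d p0); simpl; lra. }
    rewrite <- Hm, <- (mu_full M). apply mu_ext. intro w; split; [auto|intros _].
    destruct (cnt_exists (pi M w) (atoms p0 [ptrue p0]) (cnt_atoms _ _ _)) as [d [? ?]]. eauto.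
  - apply hw_FLeT. rewrite !tv_e.
    set (S := map snd (g1 ++ g2)).
    rewrite (expect_atoms p0 M S g1), (expect_atoms p0 M S g2);
      try (unfold S; rewrite ?map_app; auto using incl_l, incl_r, incl_refl).
    apply RS_le. intros d _. apply Rmult_le_compat_r.
    + apply mu_nonneg, Fm_psat.
    + apply IZR_le. apply (H unit (fun _ => choose_val d) tt).
  - specialize (IHprovable1 M); specialize (IHprovable2 M).
    apply holds_hw in IHprovable1. apply holds_hw in IHprovable2. simpl in IHprovable2. tauto.
Qed.

Fixpoint gambles {P} (f : formula P) : list (gamble P) :=
  match f with FGe t _ => map snd t | FNot g => gambles g | FAnd g h => gambles g ++ gambles h end.

Definition gdec {P} (g1 g2 : gamble P) : {g1 = g2} + {g1 <> g2} := excluded_middle_informative _.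

Fixpoint idx {P} (G : list (gamble P)) (g : gamble P) : nat :=
  match G with [] => 0%nat | h :: t => if gdec h g then 0%nat else S (idx t g) end.

Lemma idx_nth {P} (G : list (gamble P)) g : In g G -> nth (idx G g) G [] = g.
Proof. induction G; simpl; intros H; [destruct H|]. destruct (gdec a g); auto.
  destruct H; [congruence|auto]. Qed.

Fixpoint abs {P} (G : list (gamble P)) (f : formula P) : lform :=
  match f with
  | FGe t b => LGe (map (fun ag => (fst ag, idx G (snd ag))) t) b
  | FNot g => LNot (abs G g)
  | FAnd g h => LAnd (abs G g) (abs G h)
  end.

Lemma abs_lsubst {P} (G : list (gamble P)) f : incl (gambles f) G ->
  lsubst (fun n => nth n G []) (abs G f) = f.
Proof. induction f; simpl; intros H.
  - f_equal. rewrite map_map. simpl. rewrite <- (map_id t) at 2. apply map_ext_in.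
    intros [a g] Hin. simpl. rewrite idx_nth; auto. apply H. apply (in_map snd _ _ Hin).
  - f_equal; auto.
  - f_equal; [apply IHf1|apply IHf2]; intros x Hx; apply H; apply in_or_app; auto.
Qed.

Lemma abs_leval {P} (G : list (gamble P)) f x : leval x (abs G f) <-> hw (fun g => x (idx G g)) f.
Proof. induction f; simpl.
  - unfold tv, RS. rewrite map_map. simpl. tauto.
  - rewrite IHf; tauto.
  - rewrite IHf1, IHf2; tauto. Qed.

Lemma ivalid_provable {P} (p0 : P) f : (forall I, hw I f) -> provable p0 f.
Proof. intros H. rewrite <- (abs_lsubst (gambles f) f (incl_refl _)). apply ax_ineq.
  intro x. apply abs_leval. apply H. Qed.

Definition Ftrue {P} : formula P := FGe [] 0%Z.
Definition conj {P} (l : list (formula P)) := fold_right (@FAnd P) Ftrue l.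

Lemma provable_and {P} (p0 : P) f g : provable p0 f -> provable p0 g -> provable p0 (FAnd f g).
Proof. intros Hf Hg.
  set (t := TNot (TAnd (TVar 0) (TNot (TNot (TAnd (TVar 1) (TNot (TAnd (TVar 0) (TVar 1)))))))).
  assert (Ht : tautology t) by (intro v; simpl; destruct (v 0%nat), (v 1%nat); reflexivity).
  pose proof (ax_taut p0 (fun n => match n with 0%nat => f | _ => g end) Ht) as HT.
  exact (rule_MP Hg (rule_MP Hf HT)). Qed.

Lemma provable_conj {P} (p0 : P) l : Forall (provable p0) l -> provable p0 (conj l).
Proof. induction 1; simpl.
  - apply ivalid_provable. intro I. simpl. unfold tv, RS; simpl; lra.
  - apply provable_and; auto. Qed.

Lemma hw_conj {P} (I : gamble P -> R) l : hw I (conj l) -> forall f, In f l -> hw I f.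
Proof. induction l; simpl; intros H f Hi; [destruct Hi|]. destruct H as [H1 H2].
  destruct Hi as [<-|Hi]; auto. Qed.

Lemma hw_agree {P} (I1 I2 : gamble P -> R) f : (forall g, In g (gambles f) -> I1 g = I2 g) ->
  (hw I1 f <-> hw I2 f).
Proof. induction f; simpl; intro H.
  - unfold tv. rewrite (RS_ext_in _ (fun ag => IZR (fst ag) * I2 (snd ag))); [tauto|].
    intros [a g] Hin; simpl; rewrite H; auto. apply (in_map snd _ _ Hin).
  - rewrite IHf; auto; tauto.
  - rewrite IHf1, IHf2; [tauto| |]; intros; apply H; apply in_or_app; auto. Qed.

Lemma gval_zero {P} (v : P -> bool) (h : pform P -> Z) L : cnt v L = 0%nat ->
  gval v (map (fun d => (h d, d)) L) = 0%Z.
Proof. induction L; simpl; intro H; auto. destruct (psat v a); simpl in H; [lia|]. rewrite IHL; auto. Qed.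

Lemma gval_part {P} (v : P -> bool) (h : pform P -> Z) L y : cnt v L = 1%nat ->
  (forall d, In d L -> psat v d = true -> h d = y) -> gval v (map (fun d => (h d, d)) L) = y.
Proof. induction L; simpl; intros H1 H2; [lia|]. destruct (psat v a) eqn:E; simpl in H1.
  - rewrite gval_zero by lia. rewrite H2; auto; lia.
  - rewrite IHL; auto. Qed.

Definition wmu {P} (D : list (pform P)) (wt : pform P -> R) (A : pform P -> Prop) : R :=
  RS (fun d => if excluded_middle_informative (A d) then wt d else 0) D.

Definition mkM {P} (p0 : P) (D : list (pform P)) (wt : pform P -> R)
  (Hnn : forall d, In d D -> 0 <= wt d) (Hsum : RS wt D = 1) : prob_structure P.
Proof.
  refine (@Build_prob_structure P (pform P) (fun _ => True) (wmu D wt) (fun d => choose_val d)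
     (inhabits (ptrue p0)) I (fun _ _ => I) (fun _ _ _ _ => I) _ _ _ (fun _ => I)).
  - intros A _. unfold wmu. apply Rle_trans with (RS (fun _ => 0) D); [rewrite RS_zero; lra|].
    apply RS_le. intros d Hd.
    destruct excluded_middle_informative; [apply Hnn; auto|lra].
  - unfold wmu. rewrite <- Hsum. apply RS_ext_in. intros d _.
    destruct excluded_middle_informative as [_|n]; [reflexivity|exfalso; apply n; exact I].
  - intros A B _ _ Hd. unfold wmu. rewrite <- RS_plus. apply RS_ext_in. intros d _.
    destruct (excluded_middle_informative (A d \/ B d)), (excluded_middle_informative (A d)),
      (excluded_middle_informative (B d)); try lra; try tauto. exfalso; eauto.
Defined.

Lemma expect_mkM {P} (p0 : P) D wt Hnn Hsum g :
  expect (mkM p0 D wt Hnn Hsum) g = RS (fun d => IZR (cc g d) * wt d) D.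
Proof.
  change (expect (mkM p0 D wt Hnn Hsum) g) with (RS (fun x => IZR x *
     RS (fun d => if excluded_middle_informative (gval (choose_val d) g = x) then wt d else 0) D)
     (nodup Z.eq_dec (subsums (map fst g)))).
  rewrite <- (RS_swap (nodup Z.eq_dec (subsums (map fst g))) D (cc g) wt).
  - apply RS_ext_in; intros x _. f_equal. apply RS_ext_in; intros d _. unfold cc.
    destruct excluded_middle_informative, Z.eq_dec; tauto.
  - apply NoDup_nodup.
  - intros d _. apply nodup_In. apply gval_in_subsums.
Qed.

Fixpoint splitsE {P} (g : gamble P) : list (formula P) :=
  match g with
  | [] => []
  | a :: r => FEqT (e (gplus [a] r)) (e [a] ++ e r) :: splitsE r
  end.

Lemma splitsE_prov {P} (p0 : P) g : Forall (provable p0) (splitsE g).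
Proof. induction g; simpl; constructor; auto. exact (ax_E1 p0 [a] g). Qed.

Lemma splits_sum {P} (I : gamble P -> R) g : (forall f, In f (splitsE g) -> hw I f) -> I [] = 0 ->
  I g = RS (fun a => I [a]) g.
Proof. induction g as [|a g IHg]; intros H H0; [rewrite RS_nil; auto|]. rewrite RS_cons.
  rewrite <- IHg; auto.
  2: { intros x Hx; apply H; right; exact Hx. }
  assert (Hh : hw I (FEqT (e (gplus [a] g)) (e [a] ++ e g))) by (apply H; left; reflexivity).
  apply hw_FEqT in Hh. rewrite tv_app, !tv_e in Hh. exact Hh. Qed.

Definition Gam {P} (D : list (pform P)) (g : gamble P) : gamble P := map (fun d => (cc g d, d)) D.
Definition D1 {P} (D : list (pform P)) : gamble P := map (fun d => (1%Z, d)) D.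

Definition inst {P} (D : list (pform P)) (g : gamble P) : list (formula P) :=
  FLeT (e g) (e (Gam D g)) :: FLeT (e (Gam D g)) (e g) :: splitsE (Gam D g) ++
  map (fun d => FEqT (e [(cc g d, d)]) [(cc g d, gof d)]) D.

Definition Ax {P} (p0 : P) (D : list (pform P)) (Gf : list (gamble P)) : list (formula P) :=
  FEqT (e (gplus [] [])) (e [] ++ e []) :: FEq (e (gof (ptrue p0))) 1 ::
  FLeT (e (gof (ptrue p0))) (e (D1 D)) :: FLeT (e (D1 D)) (e (gof (ptrue p0))) ::
  splitsE (D1 D) ++ map (fun d => FLeT (e []) (e (gof d))) D ++ flat_map (inst D) Gf.

Lemma Forall_in {A} (Q : A -> Prop) l : (forall x, In x l -> Q x) -> Forall Q l.
Proof. apply Forall_forall. Qed.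

Theorem completeness {P} (p0 : P) f : valid_prob f -> provable p0 f.
Proof.
  intros Hv.
  set (Gf := gambles f). set (S := flat_map (fun g => map snd g) Gf). set (D := atoms p0 S).
  assert (HS : forall g, In g Gf -> incl (map snd g) S).
  { intros g Hg x Hx. unfold S. apply in_flat_map. eauto. }
  assert (HGam : forall g v, In g Gf -> gval v (Gam D g) = gval v g).
  { intros g v Hg. unfold Gam. apply gval_part. apply cnt_atoms.
    intros d Hd Hs. symmetry. eapply cc_spec; eauto. }
  assert (HD1 : forall v, gval v (D1 D) = 1%Z).
  { intros v. unfold D1. apply gval_part; auto. apply cnt_atoms. }
  assert (HT : forall v, gval v (gof (ptrue p0)) = 1%Z).
  { intro v. simpl. destruct (v p0); reflexivity. }
  assert (HA : provable p0 (conj (Ax p0 D Gf))).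
  { apply provable_conj. unfold Ax.
    repeat apply Forall_cons.
    - apply ax_E1.
    - apply ax_E4.
    - apply ax_E5. intros Wr pr w. rewrite HT, HD1. lia.
    - apply ax_E5. intros Wr pr w. rewrite HT, HD1. lia.
    - apply Forall_app; split; [apply splitsE_prov|]. apply Forall_app; split.
      + apply Forall_in. intros x Hx. apply in_map_iff in Hx. destruct Hx as [d [<- _]].
        apply ax_E5. intros Wr pr w. simpl. destruct psat; lia.
      + apply Forall_in. intros x Hx. apply in_flat_map in Hx. destruct Hx as [g [Hg Hx]].
        unfold inst in Hx. destruct Hx as [<-|[<-|Hx]].
        * apply ax_E5. intros Wr pr w. rewrite HGam; auto; lia.
        * apply ax_E5. intros Wr pr w. rewrite HGam; auto; lia.
        * apply in_app_or in Hx. destruct Hx as [Hx|Hx].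
          -- revert x Hx. apply Forall_forall, splitsE_prov.
          -- apply in_map_iff in Hx. destruct Hx as [d [<- _]]. apply ax_E2. }
  assert (HI : provable p0 (FImp (conj (Ax p0 D Gf)) f)).
  { apply ivalid_provable. intro I. change (~ (hw I (conj (Ax p0 D Gf)) /\ ~ hw I f)). intros [Hc Hnf]. apply Hnf.
    pose proof (hw_conj I _ Hc) as Hx. clear Hc Hnf HA.
    unfold Ax in Hx.
    assert (H0 : I [] = 0).
    { pose proof (Hx _ (or_introl eq_refl)) as H. apply hw_FEqT in H.
      rewrite tv_app, !tv_e in H. simpl in H. lra. }
    assert (Hsum : RS (fun d => I (gof d)) D = 1).
    { pose proof (Hx _ (or_intror (or_introl eq_refl))) as H1. apply hw_FEq in H1. rewrite tv_e in H1.
      pose proof (Hx _ (or_intror (or_intror (or_introl eq_refl)))) as H2. apply hw_FLeT in H2.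
      pose proof (Hx _ (or_intror (or_intror (or_intror (or_introl eq_refl))))) as H3. apply hw_FLeT in H3.
      rewrite !tv_e in H2, H3.
      rewrite (splits_sum I (D1 D)) in H2, H3; auto.
      2,3: intros g Hg; apply Hx; right; right; right; right; apply in_or_app; auto.
      unfold D1 in H2, H3. rewrite RS_map in H2, H3. simpl in H1. unfold gof. lra. }
    assert (Hnn : forall d, In d D -> 0 <= I (gof d)).
    { intros d Hd. assert (H : hw I (FLeT (e []) (e (gof d)))).
      { apply Hx. right; right; right; right. apply in_or_app; right. apply in_or_app; left.
        apply in_map_iff. eauto. }
      apply hw_FLeT in H. rewrite !tv_e in H. lra. }
    assert (Hg : forall g, In g Gf -> I g = RS (fun d => IZR (cc g d) * I (gof d)) D).
    { intros g Hg.
      assert (Hin : forall x, In x (inst D g) -> hw I x).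
      { intros x Hx0. apply Hx. right; right; right; right. apply in_or_app; right.
        apply in_or_app; right. apply in_flat_map. eauto. }
      pose proof (Hin _ (or_introl eq_refl)) as H1. apply hw_FLeT in H1.
      pose proof (Hin _ (or_intror (or_introl eq_refl))) as H2. apply hw_FLeT in H2.
      rewrite !tv_e in H1, H2.
      assert (I g = I (Gam D g)) as -> by lra.
      rewrite (splits_sum I (Gam D g)); auto.
      2: { intros x Hx0. apply Hin. right; right. apply in_or_app; auto. }
      unfold Gam. rewrite RS_map. apply RS_ext_in. intros d Hd.
      assert (H : hw I (FEqT (e [(cc g d, d)]) [(cc g d, gof d)])).
      { apply Hin. right; right. apply in_or_app; right. apply in_map_iff. eauto. }
      apply hw_FEqT in H. rewrite tv_e, tv_single in H. exact H. }
    pose (M := mkM p0 D (fun d => I (gof d)) Hnn Hsum).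
    apply (hw_agree (expect M) I).
    - intros g Hg0. unfold M. rewrite expect_mkM. symmetry. apply Hg. exact Hg0.
    - apply holds_hw. apply Hv. }
  exact (rule_MP HA HI).
Qed.

Theorem theorem5p1 (P : Type) (p0 : P) (f : formula P) :
  provable p0 f <-> valid_prob f.
Proof. split; [apply soundness|apply completeness]. Qed.
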